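(* Let $K$ be a field and $P$ an arbitrary poset. An element $\alpha\in FI(P)$ is regular (i.e. there exists $\chi\in FI(P)$ with $\alpha\chi\alpha=\alpha$) if and only if there exist a diagonal idempotent $\varepsilon\in FI(P)$ and invertible elements $\beta,\gamma\in FI(P)$ such that $\alpha=\beta\varepsilon\gamma$.
   Context: $K$ is a field, $P$ an arbitrary poset. $I(P)$ is the set of functions $\alpha$ assigning to each pair $x\le y$ in $P$ a value $\alpha(x,y)\in K$. An element $\alpha\in I(P)$ is a finitary series if for all $x<y$ in $P$ there are only finitely many pairs $(u,v)$ with $x\le u<v\le y$ and $\alpha(u,v)\neq0$; $FI(P)$ is the set of finitary series. $FI(P)$ is an associative $K$-algebra under pointwise addition and convolution $(\alpha\beta)(x,y)=\sum_{x\le z\le y}\alpha(x,z)\beta(z,y)$, with identity $\delta$ given by $\delta(x,y)=1$ if $x=y$ and $0$ otherwise. An element $\alpha\in FI(P)$ is diagonal if $\alpha(x,y)=0$ whenever $x\neq y$; a diagonal element is idempotent iff each $\alpha(x,x)\in\{0,1\}$. *)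

(* Defs.v *)
From HB Require Import structures.
From mathcomp Require Import all_boot all_order all_algebra.
From Stdlib Require Import Classical ClassicalEpsilon.
Set Implicit Arguments. Unset Strict Implicit. Unset Printing Implicit Defensive.
Import Order.TTheory GRing.Theory.
Local Open Scope order_scope.

Section FI.
Variables (K : fieldType) (d : Order.disp_t) (P : porderType d).

(* Elements of I(P) are represented by functions P -> P -> K; only the
   values on pairs x <= y matter (see eqI). *)
Definition series := P -> P -> K.

(* Sum of a finitely supported family over the (possibly infinite) type P.
   If the support is finite, this is the sum over any finite superset of
   the support (independent of the chosen superset); otherwise 0 (never used). *)
Definition fsupp_seq (f : P -> K) : seq P :=
  match excluded_middle_informative
          (exists s : seq P, forall z, f z != 0%R -> z \in s) with
  | left H => proj1_sig (constructive_indefinite_description _ H)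
  | right _ => [::]
  end.

Definition fsum (f : P -> K) : K := (\sum_(z <- undup (fsupp_seq f)) f z)%R.

Definition conv (a b : series) : series :=
  fun x y => fsum (fun z => if (x <= z) && (z <= y) then (a x z * b z y)%R else 0%R).

Definition delta : series := fun x y => if x == y then 1%R else 0%R.

Definition eqI (a b : series) : Prop := forall x y, x <= y -> a x y = b x y.

Definition finitary (a : series) : Prop :=
  forall x y, x < y -> exists s : seq (P * P),
    forall u v, x <= u -> u < v -> v <= y -> a u v != 0%R -> (u, v) \in s.

Definition diagonal (a : series) : Prop :=
  forall x y, x <= y -> x != y -> a x y = 0%R.

Definition idempotentI (a : series) : Prop := eqI (conv a a) a.

Definition invertibleI (a : series) : Prop :=
  exists b, finitary b /\ eqI (conv a b) delta /\ eqI (conv b a) delta.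

Definition regularI (a : series) : Prop :=
  exists c, finitary c /\ eqI (conv (conv a c) a) a.

End FI.

(* Main.v *)
Set Warnings "-notation-overridden,-ambiguous-paths,-notation-incompatible-prefix".
Require Import Defs.
From HB Require Import structures.
From mathcomp Require Import all_boot all_order all_algebra.
From Stdlib Require Import Classical ClassicalEpsilon FunctionalExtensionality ProofIrrelevance.
Set Implicit Arguments. Unset Strict Implicit. Unset Printing Implicit Defensive.
Import Order.TTheory GRing.Theory.
Local Open Scope ring_scope.
Local Open Scope order_scope.


Section Fsum.
Variables (K : fieldType) (d : Order.disp_t) (P : porderType d).

Lemma sum_cover (f : P -> K) (s1 s2 : seq P) : uniq s1 -> uniq s2 ->
  (forall z, f z != 0 -> z \in s1) -> (forall z, f z != 0 -> z \in s2) ->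
  \sum_(z <- s1) f z = \sum_(z <- s2) f z.
Proof.
move=> u1 u2 c1 c2.
have nz : forall s : seq P, \sum_(z <- s) f z = \sum_(z <- s | f z != 0) f z.
  move=> s; rewrite [RHS]big_mkcond /=; apply: eq_bigr => z _.
  by case: (eqVneq (f z) 0) => [->|].
rewrite (nz s1) (nz s2) -big_filter -[in RHS]big_filter; apply: perm_big; apply: uniq_perm.
- exact: filter_uniq.
- exact: filter_uniq.
move=> z; rewrite !mem_filter; case: (boolP (f z != 0)) => //= h.
by rewrite (c1 _ h) (c2 _ h).
Qed.

Lemma fsumE (f : P -> K) (s : seq P) : (forall z, f z != 0 -> z \in s) ->
  fsum f = \sum_(z <- undup s) f z.
Proof.
move=> hs; rewrite /fsum /fsupp_seq.
case: excluded_middle_informative => [H|H]; last by exfalso; apply: H; exists s.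
case: (constructive_indefinite_description _ H) => s0 /= h0.
apply: sum_cover; rewrite ?undup_uniq // => z hz; rewrite mem_undup; auto.
Qed.

Definition fins (f : P -> K) := exists s : seq P, forall z, f z != 0 -> z \in s.

Lemma fsum_nfin (f : P -> K) : ~ fins f -> fsum f = 0.
Proof.
move=> hf; rewrite /fsum /fsupp_seq.
by case: excluded_middle_informative => [H|H] //; rewrite big_nil.
Qed.

Lemma fsum0 : fsum (fun _ : P => 0 : K) = 0.
Proof. by rewrite (@fsumE _ [::]) ?big_nil // => z; rewrite eqxx. Qed.

Lemma fsum_ne0 (f : P -> K) : fsum f != 0 -> exists z, f z != 0.
Proof.
move=> h; apply: NNPP => hn; move: h; suff -> : f = (fun _ => 0) by rewrite fsum0 eqxx.
apply: functional_extensionality => z; apply/eqP; apply: negbNE; apply/negP => hz.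
by apply: hn; exists z.
Qed.

Lemma fsum_add (f g : P -> K) : fins f -> fins g ->
  fsum (fun z => f z + g z) = fsum f + fsum g.
Proof.
move=> [s1 h1] [s2 h2].
have c1 : forall z, f z != 0 -> z \in s1 ++ s2 by move=> z /h1; rewrite mem_cat => ->.
have c2 : forall z, g z != 0 -> z \in s1 ++ s2 by move=> z /h2; rewrite mem_cat orbC => ->.
rewrite (fsumE c1) (fsumE c2) (@fsumE _ (s1 ++ s2)) ?big_split // => z.
apply: contraR; rewrite mem_cat negb_or => /andP[n1 n2].
have -> : f z = 0 by apply/eqP; apply: contraR n1; apply: h1.
have -> : g z = 0 by apply/eqP; apply: contraR n2; apply: h2.
by rewrite addr0.
Qed.

Lemma fsum_mulr (f : P -> K) (c : K) : fsum (fun z => f z * c) = fsum f * c.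
Proof.
case: (eqVneq c 0) => [->|hc].
  rewrite mulr0 -[RHS]fsum0; congr fsum; apply: functional_extensionality => z.
  by rewrite mulr0.
case: (classic (fins f)) => [[s hs]|hn].
  rewrite (fsumE hs) (@fsumE _ s) ?big_distrl // => z; rewrite mulf_eq0 negb_or.
  by case/andP=> /hs.
rewrite (fsum_nfin hn) mul0r fsum_nfin // => [[s hs]]; apply: hn; exists s => z hz.
by apply: hs; rewrite mulf_eq0 negb_or hz hc.
Qed.

Lemma fsum_mull (f : P -> K) (c : K) : fsum (fun z => c * f z) = c * fsum f.
Proof.
rewrite mulrC -fsum_mulr; congr fsum; apply: functional_extensionality => z.
by rewrite mulrC.
Qed.

Lemma fsum_exchange (F : P -> P -> K) (L : seq P) :
  (forall w z, F w z != 0 -> (w \in L) && (z \in L)) ->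
  fsum (fun z => fsum (fun w => F w z)) = fsum (fun w => fsum (fun z => F w z)).
Proof.
move=> hL.
have e1 : (fun z => fsum (fun w => F w z)) = (fun z => \sum_(w <- undup L) F w z).
  apply: functional_extensionality => z; apply: fsumE => w /hL /andP[] //.
have e2 : (fun w => fsum (fun z => F w z)) = (fun w => \sum_(z <- undup L) F w z).
  apply: functional_extensionality => w; apply: fsumE => z /hL /andP[] //.
rewrite e1 e2 (@fsumE _ L); last first.
  move=> z; apply: contraR => hz; rewrite big1 // => w _.
  by apply/eqP; apply: contraR hz => /hL /andP[].
rewrite (@fsumE _ L); last first.
  move=> w; apply: contraR => hw; rewrite big1 // => z _.
  by apply/eqP; apply: contraR hw => /hL /andP[].
exact: exchange_big.
Qed.

End Fsum.



Section Conv.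
Variables (K : fieldType) (d : Order.disp_t) (P : porderType d).
Implicit Types (a b c : series K P) (x y z u w : P).

Lemma fcover a x y : finitary a -> exists L : seq P, x \in L /\ y \in L /\
  (forall u w, x <= u -> u < w -> w <= y -> a u w != 0 -> (u \in L) && (w \in L)).
Proof.
move=> ha; case: (boolP (x < y)) => hxy.
  have [s hs] := ha x y hxy.
  exists (x :: y :: map fst s ++ map snd s); do 2 (split; first by rewrite !inE eqxx ?orbT).
  move=> u w h1 h2 h3 h4; have := hs u w h1 h2 h3 h4 => hm.
  rewrite !inE !mem_cat.
  by rewrite (map_f fst hm) (map_f snd hm) !orbT.
exists [:: x; y]; do 2 (split; first by rewrite !inE eqxx ?orbT).
move=> u w h1 h2 h3 _; exfalso; move/negP: hxy; apply.
by apply: (le_lt_trans h1); apply: (lt_le_trans h2).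
Qed.

Lemma cover_l a x y (L : seq P) : x \in L ->
  (forall u w, x <= u -> u < w -> w <= y -> a u w != 0 -> (u \in L) && (w \in L)) ->
  forall w, x <= w -> w <= y -> a x w != 0 -> w \in L.
Proof.
move=> hx hL w h1 h2 h3; case: (eqVneq x w) => [<-//|hne].
have : x < w by rewrite lt_neqAle hne h1.
by move=> hlt; case/andP: (hL x w (lexx x) hlt h2 h3).
Qed.

Lemma cover_r a x y (L : seq P) : y \in L ->
  (forall u w, x <= u -> u < w -> w <= y -> a u w != 0 -> (u \in L) && (w \in L)) ->
  forall z, x <= z -> z <= y -> a z y != 0 -> z \in L.
Proof.
move=> hy hL z h1 h2 h3; case: (eqVneq z y) => [->//|hne].
have : z < y by rewrite lt_neqAle hne h2.
by move=> hlt; case/andP: (hL z y h1 hlt (lexx y) h3).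
Qed.

Lemma conv_out a b x y : ~~ (x <= y) -> conv a b x y = 0.
Proof.
move=> h; rewrite /conv -[RHS](@fsum0 K d P); congr fsum; apply: functional_extensionality => z.
case: (boolP ((x <= z) && (z <= y))) => // /andP[h1 h2].
by exfalso; move/negP: h; apply; apply: le_trans h2.
Qed.

Lemma conv_ext a a' b b' x y :
  (forall z, x <= z -> z <= y -> a x z = a' x z) ->
  (forall z, x <= z -> z <= y -> b z y = b' z y) ->
  conv a b x y = conv a' b' x y.
Proof.
move=> h1 h2; rewrite /conv; congr fsum; apply: functional_extensionality => z.
by case: (boolP ((x <= z) && (z <= y))) => // /andP[l1 l2]; rewrite h1 ?h2.
Qed.

Lemma conv_diag a b x : conv a b x x = a x x * b x x.
Proof.
rewrite /conv (@fsumE _ _ _ _ [:: x]) /= ?big_seq1 ?lexx //.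
move=> z; case: (boolP ((x <= z) && (z <= x))) => [hz _|]; last by rewrite eqxx.
by rewrite inE eq_le andbC.
Qed.

Lemma conv_fins_l a b x y : finitary a ->
  fins (fun z => if (x <= z) && (z <= y) then a x z * b z y else 0).
Proof.
move=> ha; have [L [hx [hy hL]]] := fcover x y ha; exists L => z.
case: (boolP ((x <= z) && (z <= y))) => [/andP[h1 h2]|]; last by rewrite eqxx.
rewrite mulf_eq0 negb_or => /andP[h3 _]; exact: (cover_l hx hL h1 h2 h3).
Qed.

Lemma conv_fins_r a b x y : finitary b ->
  fins (fun z => if (x <= z) && (z <= y) then a x z * b z y else 0).
Proof.
move=> hb; have [L [hx [hy hL]]] := fcover x y hb; exists L => z.
case: (boolP ((x <= z) && (z <= y))) => [/andP[h1 h2]|]; last by rewrite eqxx.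
rewrite mulf_eq0 negb_or => /andP[_ h3]; exact: (cover_r hy hL h1 h2 h3).
Qed.

Lemma conv_finitary a b : finitary a -> finitary b -> finitary (conv a b).
Proof.
move=> ha hb x y hxy.
have [La [_ [_ hLa]]] := fcover x y ha; have [Lb [_ [_ hLb]]] := fcover x y hb.
exists [seq (p, q) | p <- La ++ Lb, q <- La ++ Lb] => u v h1 h2 h3.
move/fsum_ne0 => [z]; case: (boolP ((u <= z) && (z <= v))) => [/andP[l1 l2]|]; last by rewrite eqxx.
rewrite mulf_eq0 negb_or => /andP[na nb].
have hu : u \in La ++ Lb.
  rewrite mem_cat; case: (eqVneq u z) => [e|ne].
    subst z; by case/andP: (hLb u v h1 h2 h3 nb) => -> _; rewrite orbT.
  have lt : u < z by rewrite lt_neqAle ne l1.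
  by case/andP: (hLa u z h1 lt (le_trans l2 h3) na) => ->.
have hv : v \in La ++ Lb.
  rewrite mem_cat; case: (eqVneq z v) => [e|ne].
    subst z; by case/andP: (hLa u v h1 h2 h3 na) => _ ->.
  have lt : z < v by rewrite lt_neqAle ne l2.
  by case/andP: (hLb z v (le_trans h1 l1) lt h3 nb) => _ ->; rewrite orbT.
by apply/allpairsP; exists (u, v).
Qed.

Lemma conv_assoc a b c : finitary a -> finitary c ->
  conv (conv a b) c = conv a (conv b c).
Proof.
move=> ha hc; apply: functional_extensionality => x; apply: functional_extensionality => y.
pose G w z := if [&& x <= w, w <= z & z <= y] then a x w * b w z * c z y else 0.
have eL : conv (conv a b) c x y = fsum (fun z => fsum (fun w => G w z)).
  rewrite /conv; congr fsum; apply: functional_extensionality => z.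
  case: (boolP ((x <= z) && (z <= y))) => [/andP[l1 l2]|hn].
    rewrite -fsum_mulr; congr fsum; apply: functional_extensionality => w.
    rewrite /G l2 andbT; case: ((x <= w) && (w <= z)) => //; by rewrite mul0r.
  rewrite -[LHS](@fsum0 K d P); congr fsum; apply: functional_extensionality => w.
  rewrite /G; case: (boolP [&& x <= w, w <= z & z <= y]) => // /and3P[l1 l2 l3].
  by move: hn; rewrite l3 (le_trans l1 l2).
have eR : conv a (conv b c) x y = fsum (fun w => fsum (fun z => G w z)).
  rewrite /conv; congr fsum; apply: functional_extensionality => w.
  case: (boolP ((x <= w) && (w <= y))) => [/andP[l1 l2]|hn].
    rewrite -fsum_mull; congr fsum; apply: functional_extensionality => z.
    rewrite /G l1 /=; case: ((w <= z) && (z <= y)) => //; by rewrite ?mulr0 ?mulrA.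
  rewrite -[LHS](@fsum0 K d P); congr fsum; apply: functional_extensionality => z.
  rewrite /G; case: (boolP [&& x <= w, w <= z & z <= y]) => // /and3P[l1 l2 l3].
  by move: hn; rewrite l1 (le_trans l2 l3).
rewrite eL eR.
have [La [hxa [_ hLa]]] := fcover x y ha; have [Lc [_ [hyc hLc]]] := fcover x y hc.
apply: (@fsum_exchange _ _ _ _ (La ++ Lc)) => w z.
rewrite /G; case: (boolP [&& x <= w, w <= z & z <= y]) => [/and3P[l1 l2 l3]|]; last by rewrite eqxx.
rewrite !mulf_eq0 !negb_or => /andP[/andP[n1 _] n3].
rewrite !mem_cat (cover_l hxa hLa l1 (le_trans l2 l3) n1).
by rewrite (cover_r hyc hLc (le_trans l1 l2) l3 n3) orbT.
Qed.

Lemma conv_addl a b c : finitary a -> finitary b ->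
  conv (fun x y => a x y + b x y) c = (fun x y => conv a c x y + conv b c x y).
Proof.
move=> ha hb; apply: functional_extensionality => x; apply: functional_extensionality => y.
rewrite /conv -fsum_add; try exact: conv_fins_l.
congr fsum; apply: functional_extensionality => z.
by case: ((x <= z) && (z <= y)); rewrite ?mulrDl ?addr0.
Qed.

Lemma conv_addr a b c : finitary a ->
  conv a (fun x y => b x y + c x y) = (fun x y => conv a b x y + conv a c x y).
Proof.
move=> ha; apply: functional_extensionality => x; apply: functional_extensionality => y.
rewrite /conv -fsum_add; try exact: conv_fins_l.
congr fsum; apply: functional_extensionality => z.
by case: ((x <= z) && (z <= y)); rewrite ?mulrDr ?addr0.
Qed.

Definition nrml a := forall x y, ~~ (x <= y) -> a x y = 0.

Lemma conv_delta_l a : nrml a -> conv (@delta K d P) a = a.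
Proof.
move=> ha; apply: functional_extensionality => x; apply: functional_extensionality => y.
case: (boolP (x <= y)) => hxy; last by rewrite conv_out // ha.
rewrite /conv (@fsumE _ _ _ _ [:: x]) /= ?big_seq1 ?lexx ?hxy /= /delta ?eqxx ?mul1r //.
move=> z; case: ((x <= z) && (z <= y)); last by rewrite eqxx.
by case: (eqVneq x z) => [->|]; rewrite ?inE ?eqxx // mul0r eqxx.
Qed.

Lemma conv_delta_r a : nrml a -> conv a (@delta K d P) = a.
Proof.
move=> ha; apply: functional_extensionality => x; apply: functional_extensionality => y.
case: (boolP (x <= y)) => hxy; last by rewrite conv_out // ha.
rewrite /conv (@fsumE _ _ _ _ [:: y]) /= ?big_seq1 ?lexx ?hxy /= /delta ?eqxx ?mulr1 //.
move=> z; case: ((x <= z) && (z <= y)); last by rewrite eqxx.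
by case: (eqVneq z y) => [->|]; rewrite ?inE ?eqxx // mulr0 eqxx.
Qed.

End Conv.



Section FIring.
Variables (K : fieldType) (d : Order.disp_t) (P : porderType d).

Definition good (a : series K P) := finitary a /\ nrml a.
Record fi := Fi { fval : series K P; fgood : good fval }.

Lemma fi_eq (r s : fi) : fval r = fval s -> r = s.
Proof.
case: r => f hf; case: s => g hg /= e; subst g.
by rewrite (proof_irrelevance _ hf hg).
Qed.

Definition fi_eqb (r s : fi) : bool :=
  if excluded_middle_informative (r = s) then true else false.
Lemma fi_eqP : Equality.axiom fi_eqb.
Proof. by move=> r s; rewrite /fi_eqb; case: excluded_middle_informative => h; constructor. Qed.
HB.instance Definition _ := hasDecEq.Build fi fi_eqP.

Definition fi_find (Pr : pred fi) (n : nat) : option fi :=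
  match excluded_middle_informative (exists x, Pr x) with
  | left H => Some (proj1_sig (constructive_indefinite_description _ H))
  | right _ => None end.
Lemma fi_find_correct Pr n x : fi_find Pr n = Some x -> Pr x.
Proof.
rewrite /fi_find; case: excluded_middle_informative => // H [<-].
by case: (constructive_indefinite_description _ H).
Qed.
Lemma fi_find_complete (Pr : pred fi) : (exists x, Pr x) -> exists n, fi_find Pr n.
Proof.
by move=> H; exists 0%N; rewrite /fi_find; case: excluded_middle_informative.
Qed.
Lemma fi_find_ext (Pr Qr : pred fi) : Pr =1 Qr -> fi_find Pr =1 fi_find Qr.
Proof.
move=> h; have e : Pr = Qr by apply: functional_extensionality.
by subst Qr.
Qed.
HB.instance Definition _ := hasChoice.Build fi fi_find_correct fi_find_complete fi_find_ext.

Lemma good0 : good (fun _ _ => 0).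
Proof. split; first by move=> x y _; exists [::] => u v _ _ _; rewrite eqxx. by []. Qed.

Lemma goodD (a b : series K P) : good a -> good b -> good (fun x y => a x y + b x y).
Proof.
move=> [fa na] [fb nb]; split; last by move=> x y h; rewrite na ?nb ?addr0.
move=> x y hxy; have [s1 h1] := fa x y hxy; have [s2 h2] := fb x y hxy.
exists (s1 ++ s2) => u v l1 l2 l3 hn; rewrite mem_cat.
case: (eqVneq (a u v) 0) => [e|ne]; last by rewrite (h1 u v l1 l2 l3 ne).
by move: hn; rewrite e add0r => /(h2 u v l1 l2 l3) ->; rewrite orbT.
Qed.

Lemma goodN (a : series K P) : good a -> good (fun x y => - a x y).
Proof.
move=> [fa na]; split; last by move=> x y h; rewrite na ?oppr0.
move=> x y hxy; have [s1 h1] := fa x y hxy.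
by exists s1 => u v l1 l2 l3; rewrite oppr_eq0; apply: h1.
Qed.

Lemma good1 : good (@delta K d P).
Proof.
split.
  move=> x y _; exists [::] => u v _ l _; rewrite /delta.
  by rewrite (lt_eqF l) eqxx.
by move=> x y h; rewrite /delta; case: eqP => // e; subst y; rewrite lexx in h.
Qed.

Lemma goodM (a b : series K P) : good a -> good b -> good (conv a b).
Proof.
move=> [fa na] [fb nb]; split; first exact: conv_finitary.
by move=> x y h; rewrite conv_out.
Qed.

Definition fi0 := Fi good0.
Definition fiD (r s : fi) := Fi (goodD (fgood r) (fgood s)).
Definition fiN (r : fi) := Fi (goodN (fgood r)).
Definition fi1 := Fi good1.
Definition fiM (r s : fi) := Fi (goodM (fgood r) (fgood s)).

Lemma fiDA : associative fiD.
Proof. by move=> r s t; apply: fi_eq; do 2 apply: functional_extensionality => ? /=; rewrite addrA. Qed.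
Lemma fiDC : commutative fiD.
Proof. by move=> r s; apply: fi_eq; do 2 apply: functional_extensionality => ? /=; rewrite addrC. Qed.
Lemma fi0D : left_id fi0 fiD.
Proof. by move=> r; apply: fi_eq; do 2 apply: functional_extensionality => ? /=; rewrite add0r. Qed.
Lemma fiND : left_inverse fi0 fiN fiD.
Proof. by move=> r; apply: fi_eq; do 2 apply: functional_extensionality => ? /=; rewrite addNr. Qed.
Lemma fiMA : associative fiM.
Proof.
move=> r s t; apply: fi_eq => /=; rewrite conv_assoc //.
  exact: (fgood r).1.
exact: (fgood t).1.
Qed.
Lemma fi1M : left_id fi1 fiM.
Proof. by move=> r; apply: fi_eq => /=; rewrite conv_delta_l //; apply: (fgood r).2. Qed.
Lemma fiM1 : right_id fi1 fiM.
Proof. by move=> r; apply: fi_eq => /=; rewrite conv_delta_r //; apply: (fgood r).2. Qed.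
Lemma fiMDl : left_distributive fiM fiD.
Proof.
move=> r s t; apply: fi_eq => /=; rewrite conv_addl //.
  exact: (fgood r).1.
exact: (fgood s).1.
Qed.
Lemma fiMDr : right_distributive fiM fiD.
Proof. by move=> r s t; apply: fi_eq => /=; rewrite conv_addr //; exact: (fgood r).1. Qed.

HB.instance Definition _ := GRing.isPzRing.Build fi fiDA fiDC fi0D fiND fiMA fi1M fiM1 fiMDl fiMDr.

End FIring.


Lemma geomr (R : pzRingType) (n : R) (M : nat) :
  ((1 - n) * \sum_(k < M) n ^+ k = 1 - n ^+ M)%R.
Proof.
elim: M => [|M IH]; first by rewrite big_ord0 mulr0 expr0 subrr.
rewrite big_ord_recr /= mulrDr IH mulrBl mul1r -exprS.
by rewrite addrA subrK.
Qed.

Lemma geoml (R : pzRingType) (n : R) (M : nat) :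
  ((\sum_(k < M) n ^+ k) * (1 - n) = 1 - n ^+ M)%R.
Proof.
elim: M => [|M IH]; first by rewrite big_ord0 mul0r expr0 subrr.
rewrite big_ord_recr /= mulrDl IH mulrBr mulr1 -exprSr.
by rewrite addrA subrK.
Qed.

Lemma count_lt (T : eqType) (p q : pred T) (s : seq T) z :
  (forall t, p t -> q t) -> z \in s -> q z -> ~~ p z -> (count p s < count q s)%N.
Proof.
move=> hpq; elim: s => [|h s IH] //= hz qz pz.
have hc : (count p s <= count q s)%N by apply: sub_count => t /hpq.
rewrite inE in hz; case: (eqVneq z h) hz => [<- _|ne /= hz].
  by rewrite qz (negbTE pz) add0n add1n ltnS.
have hh : (p h <= q h)%N by case: (p h) (@hpq h) => // ->.
have := IH hz qz pz => hlt.
by rewrite -addnS; apply: leq_add.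
Qed.

Lemma sum_trunc (K : fieldType) (F : nat -> K) (M N : nat) :
  (forall k, (M <= k)%N -> F k = 0) -> (M <= N)%N ->
  \sum_(k < N) F k = \sum_(k < M) F k.
Proof.
move=> hF hMN; rewrite [RHS](big_ord_widen _ F hMN) [RHS]big_mkcond /=; apply: eq_bigr => i _.
by case: ltnP => // h; rewrite hF.
Qed.

Section FIth.
Variables (K : fieldType) (d : Order.disp_t) (P : porderType d).
Local Notation R := (fi K P).

Lemma fvalD (r s : R) x y : fval (r + s) x y = fval r x y + fval s x y.
Proof. by []. Qed.
Lemma fvalN (r : R) x y : fval (- r) x y = - fval r x y.
Proof. by []. Qed.
Lemma fvalB (r s : R) x y : fval (r - s) x y = fval r x y - fval s x y.
Proof. by []. Qed.
Lemma fval0 x y : fval (0 : R) x y = 0.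
Proof. by []. Qed.
Lemma fvalM (r s : R) : fval (r * s) = conv (fval r) (fval s).
Proof. by []. Qed.
Lemma fval1 : fval (1 : R) = @delta K d P.
Proof. by []. Qed.
Lemma fval_sum (F : nat -> R) M x y :
  fval (\sum_(k < M) F k) x y = \sum_(k < M) fval (F k) x y.
Proof.
elim: M => [|M IH]; first by rewrite !big_ord0.
by rewrite !big_ord_recr fvalD IH.
Qed.
Lemma fval_normal (r : R) x y : ~~ (x <= y) -> fval r x y = 0.
Proof. exact: (fgood r).2. Qed.
Lemma fval_fin (r : R) : finitary (fval r).
Proof. exact: (fgood r).1. Qed.

Definition dg (r : R) (p : P) : K := fval r p p.
Lemma dgM (r s : R) p : dg (r * s) p = dg r p * dg s p.
Proof. by rewrite /dg fvalM conv_diag. Qed.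
Lemma dg1 p : dg 1 p = 1.
Proof. by rewrite /dg fval1 /delta eqxx. Qed.
Lemma dgD (r s : R) p : dg (r + s) p = dg r p + dg s p.
Proof. by []. Qed.
Lemma dgB (r s : R) p : dg (r - s) p = dg r p - dg s p.
Proof. by []. Qed.

Section Inv.
Variable uu : R.
Hypothesis hu : forall p, dg uu p = 1.
Let n := 1 - uu.

Lemma n_diag p : fval n p p = 0.
Proof. by rewrite fvalB fval1 /delta eqxx -/(dg uu p) hu subrr. Qed.

Lemma n_bound x y : exists M : nat, forall k z w, (M <= k)%N -> x <= z -> w <= y ->
  fval (n ^+ k) z w = 0.
Proof.
have [L [_ [_ hL]]] := fcover x y (fval_fin n).
have claim : forall k z w, x <= z -> w <= y -> fval (n ^+ k) z w != 0 ->
    (k <= count (fun q => (z <= q)%O) L)%N.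
  elim=> [|k IH] z w hxz hwy //.
  rewrite exprS fvalM => /fsum_ne0 [t].
  case: (boolP ((z <= t) && (t <= w))) => [/andP[l1 l2]|]; last by rewrite eqxx.
  rewrite mulf_eq0 negb_or => /andP[n1 n2].
  have ne : z != t by apply: contra_neq n1 => <-; rewrite n_diag.
  have lt : z < t by rewrite lt_neqAle ne l1.
  case/andP: (hL z t hxz lt (le_trans l2 hwy) n1) => zL tL.
  have := IH t w (le_trans hxz l1) hwy n2 => hk.
  apply: leq_ltn_trans hk _; apply: count_lt zL _ _.
  - by move=> q /= h; apply: le_trans h; apply: ltW.
  - by rewrite /= lexx.
  - by rewrite /= lt_geF.
exists (size L).+1 => k z w hk hxz hwy; apply/eqP; apply: negbNE; apply/negP => hn.
have := claim k z w hxz hwy hn => h.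
have := count_size (fun q => z <= q) L => hs.
by move: (leq_trans h hs) => h2; move: (leq_trans hk h2); rewrite ltnn.
Qed.

Definition Mf x y : nat := proj1_sig (constructive_indefinite_description _ (n_bound x y)).
Lemma MfP x y : forall k z w, (Mf x y <= k)%N -> x <= z -> w <= y -> fval (n ^+ k) z w = 0.
Proof. rewrite /Mf; by case: (constructive_indefinite_description _ _). Qed.

Definition vfun : series K P := fun x y =>
  if x <= y then \sum_(k < Mf x y) fval (n ^+ k) x y else 0.

Lemma vfun_eq z w M : z <= w -> (forall k, (M <= k)%N -> fval (n ^+ k) z w = 0) ->
  vfun z w = \sum_(k < M) fval (n ^+ k) z w.
Proof.
move=> hzw hM; rewrite /vfun hzw.
have h1 : forall k, (Mf z w <= k)%N -> fval (n ^+ k) z w = 0 by move=> k hk; exact: (MfP hk (lexx z) (lexx w)).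
rewrite -(@sum_trunc _ (fun k => fval (n ^+ k) z w) _ (maxn M (Mf z w))) ?leq_maxr //.
  by rewrite (@sum_trunc _ (fun k => fval (n ^+ k) z w) M) ?leq_maxl.
Qed.

Lemma vfun_good : good vfun.
Proof.
split; last by move=> x y h; rewrite /vfun (negbTE h).
move=> x y hxy.
have gen : forall N, exists s : seq (P * P), forall k, (k < N)%N -> forall u w,
    x <= u -> u < w -> w <= y -> fval (n ^+ k) u w != 0 -> (u, w) \in s.
  elim=> [|N [s hs]]; first by exists [::].
  have [s2 h2] := fval_fin (n ^+ N) hxy.
  exists (s ++ s2) => k hk u w l1 l2 l3 hn; rewrite mem_cat.
  rewrite ltnS leq_eqVlt in hk; case/orP: hk => [/eqP e|hk].
    by subst k; rewrite (h2 u w l1 l2 l3 hn) orbT.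
  by rewrite (hs k hk u w l1 l2 l3 hn).
have [s hs] := gen (Mf x y); exists s => u w l1 l2 l3.
rewrite (@vfun_eq u w (Mf x y)) ?(ltW l2) //; last by move=> k hk; exact: (MfP hk l1 l3).
move=> hn; apply: NNPP => hno; move/negP: hn; apply; apply/eqP.
rewrite big1 // => [[k hk]] _ /=; apply/eqP; apply: negbNE; apply/negP => hn.
by apply: hno; apply: (hs k hk u w l1 l2 l3 hn).
Qed.

Definition V : R := Fi vfun_good.

Lemma u_eq : uu = 1 - n.
Proof. by rewrite /n opprB addrC subrK. Qed.

Lemma uV : uu * V = 1.
Proof.
apply: fi_eq; apply: functional_extensionality => x; apply: functional_extensionality => y.
case: (boolP (x <= y)) => hxy; last by rewrite !fval_normal.
pose S := \sum_(k < Mf x y) n ^+ k.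
have -> : fval (uu * V) x y = fval (uu * S) x y.
  rewrite !fvalM; apply: conv_ext => // z l1 l2.
  rewrite /S fval_sum /=; apply: vfun_eq => // k hk; exact: (MfP hk l1 (lexx y)).
rewrite u_eq geomr fvalB (@MfP x y) ?lexx // subr0 //.
Qed.

Lemma Vu : V * uu = 1.
Proof.
apply: fi_eq; apply: functional_extensionality => x; apply: functional_extensionality => y.
case: (boolP (x <= y)) => hxy; last by rewrite !fval_normal.
pose S := \sum_(k < Mf x y) n ^+ k.
have -> : fval (V * uu) x y = fval (S * uu) x y.
  rewrite !fvalM; apply: conv_ext => // z l1 l2.
  rewrite /S fval_sum /=; apply: vfun_eq => // k hk; exact: (MfP hk (lexx x) l2).
rewrite u_eq geoml fvalB (@MfP x y) ?lexx // subr0 //.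
Qed.

End Inv.

Lemma fi_inv (u : R) : (forall p, dg u p = 1) -> exists v : R, u * v = 1 /\ v * u = 1.
Proof. move=> hu; exists (V hu); split; [exact: uV | exact: Vu]. Qed.

End FIth.


Lemma ring_part (R : pzRingType) (a x eps u u' w w' : R) :
  a * x * a = a -> eps * eps = eps ->
  u = x * a * eps + (1 - x * a) * (1 - eps) -> u * u' = 1 -> u' * u = 1 ->
  w = a * x * eps + (1 - a * x) * (1 - eps) -> w * w' = 1 -> w' * w = 1 ->
  exists b b' c c' : R, [/\ b * b' = 1, b' * b = 1, c * c' = 1, c' * c = 1 & a = b * eps * c].
Proof.
move=> haxa hp hu huu hu'u hw hww hw'w.
have axaL : forall z, z * a * x * a = z * a by move=> z; rewrite -!mulrA (mulrA a x a) haxa.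
have hpL : forall z, z * eps * eps = z * eps by move=> z; rewrite -mulrA hp.
have uu'L : forall z, z * u * u' = z by move=> z; rewrite -mulrA huu mulr1.
have u'uL : forall z, z * u' * u = z by move=> z; rewrite -mulrA hu'u mulr1.
have ww'L : forall z, z * w * w' = z by move=> z; rewrite -mulrA hww mulr1.
have w'wL : forall z, z * w' * w = z by move=> z; rewrite -mulrA hw'w mulr1.
have p1p : (1 - eps) * eps = 0 by rewrite mulrBl mul1r hp subrr.
have ee : x * a * (x * a) = x * a by rewrite mulrA axaL.
have ff : a * x * (a * x) = a * x by rewrite mulrA haxa.
have e1e : x * a * (1 - x * a) = 0 by rewrite mulrBr mulr1 ee subrr.
have f1f : a * x * (1 - a * x) = 0 by rewrite mulrBr mulr1 ff subrr.
have eu : x * a * u = u * eps.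
  rewrite hu (mulrDr (x * a)) (mulrA (x * a) (x * a)) ee (mulrA (x * a) (1 - x * a)) e1e mul0r addr0.
  by rewrite (mulrDl (x * a * eps)) hpL -(mulrA (1 - x * a)) p1p mulr0 addr0.
have fw : a * x * w = w * eps.
  rewrite hw (mulrDr (a * x)) (mulrA (a * x) (a * x)) ff (mulrA (a * x) (1 - a * x)) f1f mul0r addr0.
  by rewrite (mulrDl (a * x * eps)) hpL -(mulrA (1 - a * x)) p1p mulr0 addr0.
have ue : u * eps * u' = x * a by rewrite -eu uu'L.
have wf : w * eps * w' = a * x by rewrite -fw ww'L.
have ueL : forall z, z * u * eps * u' = z * x * a by move=> z; rewrite -!mulrA (mulrA u) ue mulrA.
have wfL : forall z, z * w * eps * w' = z * a * x by move=> z; rewrite -!mulrA (mulrA w) wf mulrA.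
pose m := eps * w' * a * u * eps.
pose m' := eps * u' * x * w * eps.
have mm' : m * m' = eps.
  rewrite /m /m' !mulrA hpL ueL axaL -wfL w'wL w'wL !hpL hp //.
have m'm : m' * m = eps.
  rewrite /m /m' !mulrA hpL wfL.
  rewrite (axaL (eps * u' * x)) -ueL u'uL u'uL !hpL hp //.
have meps : m * eps = m by rewrite /m hpL.
have epsm' : eps * m' = m' by rewrite /m' !mulrA hp.
have m'eps : m' * eps = m' by rewrite /m' hpL.
have epsm : eps * m = m by rewrite /m !mulrA hp.
have q2 : (1 - eps) * (1 - eps) = 1 - eps by rewrite mulrBr mulr1 p1p subr0.
pose g := m + (1 - eps); pose g' := m' + (1 - eps).
have mq : m * (1 - eps) = 0 by rewrite mulrBr mulr1 meps subrr.
have qm' : (1 - eps) * m' = 0 by rewrite mulrBl mul1r epsm' subrr.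
have m'q : m' * (1 - eps) = 0 by rewrite mulrBr mulr1 m'eps subrr.
have qm : (1 - eps) * m = 0 by rewrite mulrBl mul1r epsm subrr.
have gg' : g * g' = 1.
  rewrite /g /g' (mulrDl m (1 - eps)) (mulrDr m) (mulrDr (1 - eps)) mm' q2 mq qm'.
  by rewrite addr0 add0r addrC subrK.
have g'g : g' * g = 1.
  rewrite /g /g' (mulrDl m' (1 - eps)) (mulrDr m') (mulrDr (1 - eps)) m'm q2 m'q qm.
  by rewrite addr0 add0r addrC subrK.
have geps : g * eps = m by rewrite /g mulrDl p1p addr0 meps.
exists (w * g), (g' * w'), u', u; split => //.
- by rewrite -mulrA (mulrA g) gg' mul1r hww.
- by rewrite -mulrA (mulrA w') hw'w mul1r g'g.
rewrite -(mulrA w) geps /m !mulrA ueL axaL.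
by rewrite wf haxa.
Qed.


Section Main.
Variables (K : fieldType) (d : Order.disp_t) (P : porderType d).
Local Notation R := (fi K P).

Definition nrm (a : series K P) : series K P := fun x y => if x <= y then a x y else 0.

Lemma nrm_good (a : series K P) : finitary a -> good (nrm a).
Proof.
move=> ha; split; last by move=> x y h; rewrite /nrm (negbTE h).
move=> x y hxy; have [s hs] := ha x y hxy; exists s => u v l1 l2 l3.
by rewrite /nrm (ltW l2); apply: hs.
Qed.

Lemma conv_norml (a b : series K P) : conv (nrm a) b = conv a b.
Proof.
do 2 apply: functional_extensionality => ?; apply: conv_ext => // z l1 l2.
by rewrite /nrm l1.
Qed.
Lemma conv_normr (a b : series K P) : conv a (nrm b) = conv a b.
Proof.
do 2 apply: functional_extensionality => ?; apply: conv_ext => // z l1 l2.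
by rewrite /nrm l2.
Qed.

Lemma fi_eqI (r s : R) : eqI (fval r) (fval s) -> r = s.
Proof.
move=> h; apply: fi_eq; apply: functional_extensionality => x; apply: functional_extensionality => y.
case: (boolP (x <= y)) => hxy; first exact: h.
by rewrite !fval_normal.
Qed.

Lemma eqI_trans (a b c : series K P) : eqI a b -> eqI b c -> eqI a c.
Proof. by move=> h1 h2 x y h; rewrite h1 // h2. Qed.
Lemma eqI_sym (a b : series K P) : eqI a b -> eqI b a.
Proof. by move=> h1 x y h; rewrite h1. Qed.
Lemma eqI_nrm (a : series K P) : eqI a (nrm a).
Proof. by move=> x y h; rewrite /nrm h. Qed.
Lemma eqI_refl (a : series K P) : eqI a a.
Proof. by []. Qed.

Definition toR (a : series K P) (ha : finitary a) : R := Fi (nrm_good ha).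

Lemma fval_toR a (ha : finitary a) : fval (toR ha) = nrm a.
Proof. by []. Qed.

Lemma toR_mul a b (ha : finitary a) (hb : finitary b) :
  fval (toR ha * toR hb) = conv a b.
Proof. by rewrite fvalM !fval_toR conv_norml conv_normr. Qed.

Lemma diag_good (phi : P -> K) : good (fun x y => if x == y then phi x else 0).
Proof.
split.
  move=> x y _; exists [::] => u v _ l _; by rewrite (lt_eqF l) eqxx.
by move=> x y h; case: eqP => // e; subst y; rewrite lexx in h.
Qed.

Definition diagR (phi : P -> K) : R := Fi (diag_good phi).

Lemma diagR_idem (phi : P -> K) : (forall p, phi p * phi p = phi p) ->
  diagR phi * diagR phi = diagR phi.
Proof.
move=> hp; apply: fi_eq; apply: functional_extensionality => x; apply: functional_extensionality => y.
rewrite fvalM /=; case: (eqVneq x y) => [<-|ne]; first by rewrite conv_diag /= eqxx hp.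
rewrite /conv -[RHS](@fsum0 K d P); congr fsum; apply: functional_extensionality => z.
case: (_ && _) => //; case: eqP => [<-|]; last by rewrite mul0r.
by rewrite (negbTE ne) mulr0.
Qed.

Lemma forward (a : series K P) (ha : finitary a) : regularI a ->
  exists (e b c : series K P),
    finitary e /\ diagonal e /\ idempotentI e /\
    finitary b /\ invertibleI b /\ finitary c /\ invertibleI c /\
    eqI a (conv (conv b e) c).
Proof.
move=> [c [hc hreg]].
pose A := toR ha; pose X := toR hc.
have hAXA : A * X * A = A.
  apply: fi_eqI; rewrite fvalM toR_mul fval_toR conv_normr.
  exact: (eqI_trans hreg (eqI_nrm a)).
pose phi p := dg (X * A) p.
have hdg : forall p, dg A p * dg X p * dg A p = dg A p by move=> p; rewrite -!dgM hAXA.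
have hphi : forall p, phi p * phi p = phi p.
  by move=> p; rewrite /phi dgM -!mulrA (mulrA (dg A p)) hdg.
have hphi' : forall p, dg (A * X) p = phi p by move=> p; rewrite /phi !dgM mulrC.
pose eps := diagR phi.
have heps : eps * eps = eps by apply: diagR_idem.
have dgeps : forall p, dg eps p = phi p by move=> p; rewrite /dg /= eqxx.
have one_phi : forall p, phi p * phi p + (1 - phi p) * (1 - phi p) = 1.
  move=> p; rewrite hphi mulrBr mulr1 mulrBl mul1r hphi subrr subr0 addrC subrK //.
pose u := X * A * eps + (1 - X * A) * (1 - eps).
pose w := A * X * eps + (1 - A * X) * (1 - eps).
have [u' [hu1 hu2]] : exists v : R, u * v = 1 /\ v * u = 1.
  apply: fi_inv => p; rewrite /u dgD !dgM !dgB dg1 dgeps -dgM; exact: one_phi.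
have [w' [hw1 hw2]] : exists v : R, w * v = 1 /\ v * w = 1.
  apply: fi_inv => p; rewrite /w dgD !dgM !dgB dg1 dgeps -dgM hphi'; exact: one_phi.
have [b [b' [cc [cc' [hb1 hb2 hc1 hc2 hA]]]]] :=
  ring_part hAXA heps (erefl u) hu1 hu2 (erefl w) hw1 hw2.
exists (fval eps), (fval b), (fval cc).
split; first exact: fval_fin.
split; first by move=> x y _ ne; rewrite /= (negbTE ne).
split; first by rewrite /idempotentI -fvalM heps.
split; first exact: fval_fin.
split; first by exists (fval b'); split; [exact: fval_fin | rewrite -fvalM hb1 -fvalM hb2].
split; first exact: fval_fin.
split; first by exists (fval cc'); split; [exact: fval_fin | rewrite -fvalM hc1 -fvalM hc2].
rewrite -!fvalM -hA fval_toR; exact: eqI_nrm.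
Qed.

Lemma backward (a : series K P) (ha : finitary a) :
  (exists (e b c : series K P),
    finitary e /\ diagonal e /\ idempotentI e /\
    finitary b /\ invertibleI b /\ finitary c /\ invertibleI c /\
    eqI a (conv (conv b e) c)) -> regularI a.
Proof.
move=> [e [b [c [he [_ [hee [hb [[b' [hb' [hb1 hb2]]] [hc [[c' [hc' [hc1 hc2]]] habc]]]]]]]]]].
pose A := toR ha; pose E := toR he; pose B := toR hb; pose B' := toR hb'.
pose C := toR hc; pose C' := toR hc'.
have eB1 : B * B' = 1 by apply: fi_eqI; rewrite toR_mul.
have eB2 : B' * B = 1 by apply: fi_eqI; rewrite toR_mul.
have eC1 : C * C' = 1 by apply: fi_eqI; rewrite toR_mul.
have eC2 : C' * C = 1 by apply: fi_eqI; rewrite toR_mul.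
have eE : E * E = E.
  by apply: fi_eqI; rewrite toR_mul fval_toR; exact: (eqI_trans hee (eqI_nrm e)).
have eA : A = B * E * C.
  apply: fi_eqI; rewrite fvalM toR_mul fval_toR conv_normr.
  exact: (eqI_trans (eqI_sym (eqI_nrm a)) habc).
pose X := C' * E * B'.
have hAXA : A * X * A = A.
  rewrite /X eA !mulrA -(mulrA _ C C') eC1 mulr1 -(mulrA _ E E) eE.
  by rewrite -(mulrA _ B' B) eB2 mulr1 -(mulrA _ E E) eE.
exists (fval X); split; first exact: fval_fin.
have : fval (A * X * A) = fval A by rewrite hAXA.
rewrite !fvalM fval_toR conv_norml conv_normr => ->.
exact: eqI_sym (eqI_nrm a).
Qed.

End Main.

Theorem theorem4 (K : fieldType) (d : Order.disp_t) (P : porderType d)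
  (a : series K P) (ha : finitary a) :
  regularI a <->
  exists (e b c : series K P),
    finitary e /\ diagonal e /\ idempotentI e /\
    finitary b /\ invertibleI b /\ finitary c /\ invertibleI c /\
    eqI a (conv (conv b e) c).
Proof. split; [exact: forward | exact: backward]. Qed.
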